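(* Let $(E,\tau)$ be a locally solid vector lattice and let $x\in E$. Let $I_x$ and $B_x$ denote the ideal and the band in $E$ generated by $x$. Then the restricted topology $\tau|_{B_x}$ is solidly submetrisable if and only if the restricted topology $\tau|_{I_x}$ is solidly submetrisable.
   Context: All vector lattices are real and Archimedean; linear topologies are Hausdorff. A locally solid topology on a vector lattice is a linear topology such that zero has a neighbourhood basis of solid sets. A locally solid topology $\sigma$ on a vector lattice $G$ is called solidly submetrisable if it is finer than some metrisable locally solid topology on $G$. (Here $I_x$ and $B_x$ are regarded as vector lattices with the restricted topologies.) *)

(* Defs.v *)
From mathcomp Require Import all_boot all_order all_algebra.
From mathcomp Require Import boolp classical_sets reals.

Set Implicit Arguments.
Unset Strict Implicit.
Unset Printing Implicit Defensive.

Import Order.TTheory GRing.Theory Num.Theory.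
Local Open Scope ring_scope.
Local Open Scope classical_set_scope.

Record VectorLattice (R : realType) (E : lmodType R) : Type := {
  vle : E -> E -> Prop;
  vsup : E -> E -> E;
  vle_refl : forall x, vle x x;
  vle_anti : forall x y, vle x y -> vle y x -> x = y;
  vle_trans : forall x y z, vle x y -> vle y z -> vle x z;
  vle_add : forall x y z, vle x y -> vle (x + z) (y + z);
  vle_scale : forall (a : R) x y, 0 <= a -> vle x y -> vle (a *: x) (a *: y);
  vsup_ub_l : forall x y, vle x (vsup x y);
  vsup_ub_r : forall x y, vle y (vsup x y);
  vsup_least : forall x y z, vle x z -> vle y z -> vle (vsup x y) z;
  varchimedean : forall x y, vle 0 x -> (forall n : nat, vle (x *+ n) y) -> x = 0
}.

Section VL.
Variables (R : realType) (E : lmodType R) (L : VectorLattice E).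

Definition vabs (x : E) : E := vsup L x (- x).

Definition solid (A : set E) : Prop :=
  forall x y, A x -> vle L (vabs y) (vabs x) -> A y.

Definition vsubspace (A : set E) : Prop :=
  A 0 /\ (forall x y, A x -> A y -> A (x + y)) /\
  (forall (a : R) x, A x -> A (a *: x)).

Definition ideal (A : set E) : Prop := vsubspace A /\ solid A.

Definition is_sup (D : set E) (s : E) : Prop :=
  (forall d, D d -> vle L d s) /\
  (forall u, (forall d, D d -> vle L d u) -> vle L s u).

Definition band (A : set E) : Prop :=
  ideal A /\ (forall D s, D `<=` A -> is_sup D s -> A s).

Definition ideal_gen (x : E) : set E :=
  fun y => forall A, ideal A -> A x -> A y.
Definition band_gen (x : E) : set E :=
  fun y => forall A, band A -> A x -> A y.

(* This models the topology of the vector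
   lattice S (an ideal of E, with the restricted operations). *)
Definition topology_on (S : set E) (T : set (set E)) : Prop :=
  (forall U, T U -> U `<=` S) /\ T S /\ T set0 /\
  (forall F : set (set E), F `<=` T -> T (\bigcup_(U in F) U)) /\
  (forall U V, T U -> T V -> T (U `&` V)).

Definition linear_topology_on (S : set E) (T : set (set E)) : Prop :=
  topology_on S T /\
  (forall x y W, S x -> S y -> T W -> W (x + y) ->
     exists U V, [/\ T U, T V, U x, V y &
       forall u v, U u -> V v -> W (u + v)]) /\
  (forall (a : R) x W, S x -> T W -> W (a *: x) ->
     exists (d : R) U, [/\ 0 < d, T U, U x &
       forall (b : R) u, `|b - a| < d -> U u -> W (b *: u)]) /\
  (forall x y, S x -> S y -> x <> y ->
     exists U V, [/\ T U, T V, U x, V y & U `&` V = set0]).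

Definition nbhd_of (T : set (set E)) (z : E) (N : set E) : Prop :=
  exists U, [/\ T U, U z & U `<=` N].

Definition solid_in (S A : set E) : Prop :=
  forall x y, A x -> S y -> vle L (vabs y) (vabs x) -> A y.

Definition locally_solid_on (S : set E) (T : set (set E)) : Prop :=
  linear_topology_on S T /\
  forall W, nbhd_of T 0 W ->
    exists N, [/\ nbhd_of T 0 N, N `<=` W, N `<=` S & solid_in S N].

Definition metric_on (S : set E) (d : E -> E -> R) : Prop :=
  (forall x y, S x -> S y -> 0 <= d x y) /\
  (forall x y, S x -> S y -> (d x y = 0 <-> x = y)) /\
  (forall x y, S x -> S y -> d x y = d y x) /\
  (forall x y z, S x -> S y -> S z -> d x z <= d x y + d y z).

Definition metric_open (S : set E) (d : E -> E -> R) (U : set E) : Prop :=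
  U `<=` S /\
  forall u, U u -> exists e : R, 0 < e /\ forall v, S v -> d u v < e -> U v.

Definition metrisable_on (S : set E) (T : set (set E)) : Prop :=
  exists d, metric_on S d /\ forall U, T U <-> metric_open S d U.

Definition coarser (rho sigma : set (set E)) : Prop := rho `<=` sigma.

Definition solidly_submetrisable_on (S : set E) (sigma : set (set E)) : Prop :=
  exists rho, [/\ locally_solid_on S rho, metrisable_on S rho & coarser rho sigma].

Definition restrict_top (tau : set (set E)) (S : set E) : set (set E) :=
  fun V => exists U, tau U /\ V = U `&` S.

End VL.

(* Main.v *)
Require Import Defs.
From mathcomp Require Import all_boot all_order all_algebra.
From mathcomp Require Import boolp classical_sets reals.
From mathcomp Require Import ring lra.

Set Implicit Arguments.
Unset Strict Implicit.
Unset Printing Implicit Defensive.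
Import Order.TTheory GRing.Theory Num.Theory.
Local Open Scope ring_scope.
Local Open Scope classical_set_scope.



Section Lat.
Variables (R : realType) (E : lmodType R) (L : VectorLattice E).
Local Notation le := (vle L).
Local Notation sup := (vsup L).
Local Notation abs := (vabs L).

Lemma le_antis a b : le a b -> le b a -> a = b. Proof. exact: vle_anti. Qed.

Lemma le_tr a b c : le a b -> le b c -> le a c. Proof. exact: vle_trans. Qed.

Lemma le_addl a b c : le a b -> le (c + a) (c + b).
Proof. by move=> h; rewrite ![c + _]addrC; apply: vle_add. Qed.

Lemma le_add2 a b c d : le a b -> le c d -> le (a + c) (b + d).
Proof. move=> h1 h2; apply: (le_tr (vle_add c h1)); exact: le_addl. Qed.

Lemma le_opp a b : le a b -> le (-b) (-a).
Proof.
move=> h; have := vle_add (- a - b) h.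
by rewrite addrA subrr add0r addrCA subrr addr0.
Qed.

Lemma le_sub0 a b : le a b -> le 0 (b - a).
Proof. by move=> h; have := vle_add (- a) h; rewrite subrr. Qed.

Lemma le_sub0' a b : le 0 (b - a) -> le a b.
Proof. by move=> h; have := vle_add a h; rewrite add0r subrK. Qed.

Lemma supC a b : sup a b = sup b a.
Proof.
by apply: le_antis; apply: vsup_least;
  first [exact: vsup_ub_l | exact: vsup_ub_r].
Qed.

Lemma le_addsub a b c : le a (b - c) -> le (a + c) b.
Proof. by move=> h; have := vle_add c h; rewrite subrK. Qed.

Lemma le_subadd a b c : le (a + c) b -> le a (b - c).
Proof. by move=> h; have := vle_add (- c) h; rewrite addrK. Qed.

Lemma sup_add a b c : sup a b + c = sup (a + c) (b + c).
Proof.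
apply: le_antis.
- apply: le_addsub; apply: vsup_least; apply: le_subadd;
    [exact: vsup_ub_l | exact: vsup_ub_r].
- apply: vsup_least; apply: vle_add; [exact: vsup_ub_l | exact: vsup_ub_r].
Qed.

Lemma sup_scale (t : R) a b : 0 < t -> sup (t *: a) (t *: b) = t *: sup a b.
Proof.
move=> t0; apply: le_antis.
- apply: vsup_least; apply: vle_scale; rewrite ?ltW //;
    [exact: vsup_ub_l | exact: vsup_ub_r].
- have ti : 0 <= t^-1 by rewrite invr_ge0 ltW.
  have e : forall y : E, y = t *: (t^-1 *: y).
    by move=> y; rewrite scalerA divrr ?scale1r // unitfE gt_eqF.
  rewrite [X in le _ X]e; apply: vle_scale; first exact: ltW.
  have e2 : forall y : E, y = t^-1 *: (t *: y).
    by move=> y; rewrite scalerA mulVf ?scale1r // gt_eqF.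
  apply: vsup_least.
  + rewrite [X in le X _]e2; apply: vle_scale => //; exact: vsup_ub_l.
  + rewrite [X in le X _]e2; apply: vle_scale => //; exact: vsup_ub_r.
Qed.

Definition vinf a b := - sup (- a) (- b).

Lemma inf_lb_l a b : le (vinf a b) a.
Proof. rewrite -[X in le _ X]opprK; apply: le_opp; exact: vsup_ub_l. Qed.
Lemma inf_lb_r a b : le (vinf a b) b.
Proof. rewrite -[X in le _ X]opprK; apply: le_opp; exact: vsup_ub_r. Qed.
Lemma inf_glb a b c : le c a -> le c b -> le c (vinf a b).
Proof.
move=> h1 h2; rewrite -[c]opprK; apply: le_opp; apply: vsup_least; exact: le_opp.
Qed.

Lemma inf_add a b c : vinf a b + c = vinf (a + c) (b + c).
Proof.
by rewrite /vinf -[c]opprK -opprD sup_add !opprK -!opprD.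
Qed.

Lemma modular a b : vinf a b + sup a b = a + b.
Proof.
have h : sup (-a) (-b) + (a + b) = sup a b.
  rewrite sup_add addKr supC; congr (sup _ _); by rewrite addrC addrK.
by rewrite /vinf -h addKr.
Qed.

Lemma le_absl a : le a (abs a). Proof. exact: vsup_ub_l. Qed.
Lemma le_absN a : le (- a) (abs a). Proof. exact: vsup_ub_r. Qed.
Lemma abs_least a c : le a c -> le (- a) c -> le (abs a) c.
Proof. exact: vsup_least. Qed.

Lemma half_pos a : le 0 (a + a) -> le 0 a.
Proof.
move=> h.
have e : a = (2^-1 : R) *: (a + a).
  by rewrite -mulr2n -scaler_nat scalerA mulVf ?scale1r // pnatr_eq0.
rewrite e -(scaler0 _ (2^-1 : R)); apply: vle_scale => //.
by rewrite invr_ge0 ler0n.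
Qed.

Lemma abs_ge0 a : le 0 (abs a).
Proof.
apply: half_pos; have := le_add2 (le_absl a) (le_absN a); by rewrite subrr.
Qed.

Lemma absN a : abs (- a) = abs a.
Proof. by rewrite /vabs opprK supC. Qed.

Lemma abs_pos a : le 0 a -> abs a = a.
Proof.
move=> h; apply: le_antis; last exact: le_absl.
apply: abs_least; first exact: vle_refl.
apply: le_tr (h); rewrite -oppr0; exact: le_opp.
Qed.

Lemma abs0 : abs 0 = 0. Proof. apply: abs_pos; exact: vle_refl. Qed.

Lemma abs_eq0 a : abs a = 0 -> a = 0.
Proof.
move=> h; apply: le_antis; first by rewrite -h; exact: le_absl.
rewrite -[a]opprK -oppr0; apply: le_opp; rewrite -h; exact: le_absN.
Qed.

Lemma abs_tri a b : le (abs (a + b)) (abs a + abs b).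
Proof.
apply: abs_least; first exact: le_add2 (le_absl a) (le_absl b).
rewrite opprD; exact: le_add2 (le_absN a) (le_absN b).
Qed.

Lemma absZ (t : R) a : abs (t *: a) = `|t| *: abs a.
Proof.
have pos : forall s y, 0 <= s -> abs (s *: y) = s *: abs y.
  move=> s y; rewrite le_eqVlt => /orP[/eqP <-|s0].
    by rewrite !scale0r abs0.
  by rewrite /vabs -sup_scale // scalerN.
case: (lerP 0 t) => t0; first by rewrite ger0_norm // pos.
by rewrite ltr0_norm // -absN -scaleNr pos ?oppr_ge0 ?ltW // scaleNr scalerN absN.
Qed.

Lemma abs_abs a : abs (abs a) = abs a.
Proof. exact/abs_pos/abs_ge0. Qed.

Lemma inf_ge0 a b : le 0 a -> le 0 b -> le 0 (vinf a b).
Proof. exact: inf_glb. Qed.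

Lemma inf_mono a a' b : le a a' -> le (vinf a b) (vinf a' b).
Proof.
move=> h; apply: inf_glb; [exact: le_tr (inf_lb_l _ _) h| exact: inf_lb_r].
Qed.

Lemma infC a b : vinf a b = vinf b a. Proof. by rewrite /vinf supC. Qed.

Lemma le_subl a b c : le (a - c) b -> le a (b + c).
Proof. by move=> h; have := vle_add c h; rewrite subrK. Qed.

Lemma le_subl' a b c : le a (b + c) -> le (a - c) b.
Proof. by move=> h; have := vle_add (- c) h; rewrite addrK. Qed.

Lemma le_addpos a c : le 0 c -> le a (a + c).
Proof. by move=> h; have := le_addl a h; rewrite addr0. Qed.

Lemma inf_subadd a b c : le 0 a -> le 0 b -> le 0 c ->
  le (vinf (a + b) c) (vinf a c + vinf b c).
Proof.
move=> a0 b0 c0; set m := vinf (a + b) c.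
have Q0 : le 0 (vinf b c) by exact: inf_ge0.
apply: le_subl; apply: inf_glb.
- apply: le_subl'; rewrite addrC inf_add; apply: inf_glb.
  + rewrite addrC; exact: inf_lb_l.
  + apply: le_tr (inf_lb_r _ _) _; exact: le_addpos.
- apply: le_tr (inf_lb_r (a + b) c); apply: le_subl'; exact: le_addpos.
Qed.

End Lat.



Section Lat2.
Variables (R : realType) (E : lmodType R) (L : VectorLattice E).
Local Notation le := (vle L).
Local Notation sup := (vsup L).
Local Notation abs := (vabs L).
Local Notation vinf := (vinf L).

Lemma sup_mono a a' b : le a a' -> le (sup a b) (sup a' b).
Proof.
move=> h; apply: vsup_least; [exact: le_tr h (vsup_ub_l L _ _) | exact: vsup_ub_r].
Qed.

Lemma scale_le_nat (t : R) v : le 0 v -> exists k : nat, le (`|t| *: v) (v *+ k).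
Proof.
move=> v0; exists (Num.bound `|t|); rewrite -scaler_nat.
apply: le_sub0'; rewrite -scalerBl.
rewrite -(scaler0 _ ((Num.bound `|t|)%:R - `|t|)).
apply: vle_scale => //; rewrite subr_ge0 ltW //; exact: archi_boundP.
Qed.

Lemma inf_id a : vinf a a = a.
Proof. apply: (@le_antis _ _ L); [exact: inf_lb_l | apply: inf_glb; exact: vle_refl]. Qed.

Definition phi c y := vinf (abs y) c.

Variable c : E.
Hypothesis c0 : le 0 c.

Lemma phi_ge0 y : le 0 (phi c y).
Proof. apply: inf_ge0 => //; exact: abs_ge0. Qed.
Lemma phi_le_abs y : le (phi c y) (abs y). Proof. exact: inf_lb_l. Qed.
Lemma phi_le_c y : le (phi c y) c. Proof. exact: inf_lb_r. Qed.
Lemma phi_mono y z : le (abs y) (abs z) -> le (phi c y) (phi c z).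
Proof. exact: inf_mono. Qed.
Lemma phi_add y z : le (phi c (y + z)) (phi c y + phi c z).
Proof.
apply: le_tr (inf_subadd (abs_ge0 L _) (abs_ge0 L _) c0).
exact/inf_mono/abs_tri.
Qed.
Lemma phiN y : phi c (- y) = phi c y.
Proof. by rewrite /phi absN. Qed.
Lemma abs_phi y : abs (phi c y) = phi c y.
Proof. exact/abs_pos/phi_ge0. Qed.

Definition Dis : set E := fun z => phi c z = 0.

Lemma Dis_le z : le (phi c z) 0 -> Dis z.
Proof. by move=> h; apply: (@le_antis _ _ L) => //; exact: phi_ge0. Qed.

Lemma Dis_add y z : Dis y -> Dis z -> Dis (y + z).
Proof. move=> hy hz; apply: Dis_le; rewrite -(addr0 0) -{1}hy -hz; exact: phi_add. Qed.

Lemma Dis_solid y z : Dis y -> le (abs z) (abs y) -> Dis z.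
Proof. move=> hy h; apply: Dis_le; rewrite -hy; exact: phi_mono. Qed.

Lemma Dis0 : Dis 0.
Proof. apply: Dis_le; rewrite /phi abs0; exact: inf_lb_l. Qed.

Lemma Dis_muln y k : Dis y -> Dis (y *+ k).
Proof.
move=> hy; elim: k => [|k ih]; first by rewrite mulr0n; exact: Dis0.
by rewrite mulrS; apply: Dis_add.
Qed.

Lemma Dis_scale (t : R) y : Dis y -> Dis (t *: y).
Proof.
move=> hy; have [k hk] := scale_le_nat t (abs_ge0 L y).
apply: (@Dis_solid (abs y *+ k)).
  apply: Dis_muln; apply: (Dis_solid hy); rewrite abs_abs; exact: vle_refl.
rewrite absZ; apply: le_tr hk _; rewrite [abs (abs y *+ k)]abs_pos; first exact: vle_refl.
have -> : abs y *+ k = (k%:R : R) *: abs y by rewrite scaler_nat.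
rewrite -(scaler0 _ (k%:R : R)); apply: vle_scale => //; exact: abs_ge0.
Qed.

Lemma Dis_band : band L Dis.
Proof.
split.
  split; first split; [exact: Dis0 | split; [exact: Dis_add | exact: Dis_scale] |].
  move=> y z hy h; exact: Dis_solid hy h.
move=> D s DD [sub lst].
have [[d0 Dd0]|ne] := pselect (exists d, D d); last first.
  have s0 : s = 0.
    apply: (@le_antis _ _ L).
      by apply: lst => d Dd; exfalso; apply: ne; exists d.
    have h : le s (s + s) by apply: lst => d Dd; exfalso; apply: ne; exists d.
    by have := le_sub0 h; rewrite addrK.
  rewrite s0; exact: Dis0.
set t := sup s 0; set n := sup (- s) 0.
have t0 : le 0 t by exact: vsup_ub_r.
have n0 : le 0 n by exact: vsup_ub_r.
apply: Dis_le.
have h1 : le (phi c s) (vinf t c + vinf n c).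
  apply: le_tr (inf_subadd t0 n0 c0); apply: inf_mono; apply: abs_least.
  - apply: le_tr (vsup_ub_l L _ _) _; exact: le_addpos.
  - apply: le_tr (vsup_ub_l L _ _) _; rewrite addrC; exact: le_addpos.
apply: le_tr h1 _; rewrite -(addr0 0); apply: le_add2.
-
  have key : le s (sup t c - c).
    apply: lst => d Dd; set dp := sup d 0.
    have dpc : vinf dp c = 0.
      apply: (@le_antis _ _ L); last by apply: inf_ge0 => //; exact: vsup_ub_r.
      rewrite -(DD d Dd); apply: inf_mono; apply: vsup_least; [exact: le_absl| exact: abs_ge0].
    have e : dp = sup dp c - c by have := modular L dp c; rewrite dpc add0r => ->; rewrite addrK.
    apply: le_tr (vsup_ub_l L d 0) _; rewrite -/dp e; apply: vle_add; apply: sup_mono.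
    apply: sup_mono; exact: sub.
  have key2 : le t (sup t c - c).
    apply: vsup_least => //; apply: le_sub0; exact: vsup_ub_r.
  have e : vinf t c = t + c - sup t c by rewrite -(modular L t c) addrK.
  rewrite e; apply: le_subl'; rewrite add0r; apply: le_addsub; exact: key2.
-
  rewrite -(DD d0 Dd0); apply: inf_mono; apply: vsup_least; last exact: abs_ge0.
  apply: le_tr _ (le_absN L d0); apply: le_opp; exact: sub.
Qed.

End Lat2.



Section Gen.
Variables (R : realType) (E : lmodType R) (L : VectorLattice E).
Local Notation le := (vle L).
Local Notation sup := (vsup L).
Local Notation abs := (vabs L).
Local Notation vinf := (vinf L).

Lemma band_cap (I : Type) (P : I -> Prop) (F : I -> set E) :
  (forall i, P i -> band L (F i)) -> band L (fun z => forall i, P i -> F i z).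
Proof.
move=> h; split; first split; first split.
- by move=> i Pi; have [[[]]] := h i Pi.
- split.
  + by move=> a b Ha Hb i Pi; have [[[_ [hD _]] _] _] := h i Pi; apply: hD; auto.
  + by move=> t a Ha i Pi; have [[[_ [_ hZ]] _] _] := h i Pi; apply: hZ; auto.
- by move=> a b Ha hab i Pi; have [[_ hS] _] := h i Pi; apply: (hS a); auto.
- move=> D s sub hs i Pi; have [_ hB] := h i Pi; apply: (hB D s) => // d Dd.
  exact: sub.
Qed.

Variable x : E.

Definition DD : set E := fun z => forall w, Dis L (abs x) w -> Dis L (abs w) z.

Lemma DD_band : band L DD.
Proof. apply: band_cap => w _; apply: Dis_band; exact: abs_ge0. Qed.

Lemma DD_x : DD x.
Proof. by move=> w; rewrite /Dis /phi infC. Qed.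

Lemma band_disj y : band_gen L x y -> phi L (abs x) y = 0 -> y = 0.
Proof.
move=> hy h0; have := hy DD DD_band DD_x y h0.
rewrite /Dis /phi inf_id; exact: abs_eq0.
Qed.

Lemma ig_x : ideal_gen L x x. Proof. by move=> A _. Qed.
Lemma bg_x : band_gen L x x. Proof. by move=> A _. Qed.

Lemma ig0 : ideal_gen L x 0. Proof. by move=> A [[h0 _] _]. Qed.
Lemma igD a b : ideal_gen L x a -> ideal_gen L x b -> ideal_gen L x (a + b).
Proof. move=> ha hb A hA Ax; have [[_ [hD _]] _] := hA; by apply: hD; [apply: ha | apply: hb]. Qed.
Lemma igZ (t : R) a : ideal_gen L x a -> ideal_gen L x (t *: a).
Proof. move=> ha A hA Ax; have [[_ [_ hZ]] _] := hA; by apply: hZ; apply: ha. Qed.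
Lemma ig_solid a b : ideal_gen L x a -> le (abs b) (abs a) -> ideal_gen L x b.
Proof. move=> ha hab A hA Ax; have [_ hS] := hA; by apply: (hS a) => //; apply: ha. Qed.

Lemma bg0 : band_gen L x 0. Proof. by move=> A [[[h0 _] _] _]. Qed.
Lemma bgD a b : band_gen L x a -> band_gen L x b -> band_gen L x (a + b).
Proof. move=> ha hb A hA Ax; have [[[_ [hD _]] _] _] := hA; by apply: hD; [apply: ha | apply: hb]. Qed.
Lemma bgZ (t : R) a : band_gen L x a -> band_gen L x (t *: a).
Proof. move=> ha A hA Ax; have [[[_ [_ hZ]] _] _] := hA; by apply: hZ; apply: ha. Qed.
Lemma bgN a : band_gen L x a -> band_gen L x (- a).
Proof. by move=> h; rewrite -scaleN1r; exact: bgZ. Qed.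
Lemma bgB a b : band_gen L x a -> band_gen L x b -> band_gen L x (a - b).
Proof. by move=> ha hb; apply: bgD => //; exact: bgN. Qed.

Lemma ig_bg a : ideal_gen L x a -> band_gen L x a.
Proof. by move=> ha A [hA _] Ax; apply: ha. Qed.

Lemma phi_ig y : ideal_gen L x (phi L (abs x) y).
Proof.
apply: (ig_solid ig_x); rewrite abs_phi; last exact: abs_ge0.
apply: phi_le_c.
Qed.

End Gen.



Section Restr.
Variables (R : realType) (E : lmodType R) (L : VectorLattice E).
Local Notation le := (vle L).
Local Notation abs := (vabs L).

Variables (S S' : set E).
Hypothesis sub : S' `<=` S.

Lemma seteq (A B : set E) : (forall z, A z <-> B z) -> A = B.
Proof. by move=> h; apply: funext => z; apply: propext. Qed.

Lemma restrict_topology (rho : set (set E)) :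
  topology_on S rho -> topology_on S' (restrict_top rho S').
Proof.
move=> [hsub [hS [h0 [hU hI]]]]; split; [|split; [|split; [|split]]].
- by move=> U [O [_ ->]] z [].
- exists S; split => //; apply: seteq => z; split; [by move=> h; split => //; exact: sub|by case].
- exists set0; split => //; apply: seteq => z; split; [by []|by case].
- move=> F hF.
  exists (\bigcup_(O in [set O | rho O /\ F (O `&` S')]) O); split.
    by apply: hU => O [].
  apply: seteq => z; split.
  + move=> [U FU Uz]; have [O [rO eO]] := hF U FU.
    have : (O `&` S') z by rewrite -eO.
    move=> [Oz S'z]; split => //; exists O => //; split => //; by rewrite -eO.
  + by move=> [[O [_ FO] Oz] S'z]; exists (O `&` S').
- move=> U V [O1 [r1 ->]] [O2 [r2 ->]]; exists (O1 `&` O2); split; first exact: hI.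
  apply: seteq => z; split; [by move=> [[a b] [c d]]|by move=> [[a c] b]].
Qed.

Lemma restrict_metric (rho : set (set E)) (d : E -> E -> R) :
  metric_on S d -> (forall U, rho U <-> metric_open S d U) ->
  forall U, restrict_top rho S' U <-> metric_open S' d U.
Proof.
move=> [dp [d0 [dsym dtri]]] hd U; split.
- move=> [O [/hd [OS hO] ->]]; split; first by move=> z [].
  move=> u [Ou S'u]; have [e [e0 he]] := hO u Ou; exists e; split => // v S'v duv.
  split => //; apply: he => //; exact: sub.
- move=> [US' hU].
  pose O := fun v => S v /\ exists u e, [/\ U u, 0 < e,
     (forall w, S' w -> d u w < e -> U w) & d u v < e].
  have rO : rho O.
    apply/hd; split; first by move=> v [].
    move=> v [Sv [u [e [Uu e0 he duv]]]]; exists (e - d u v); split.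
      by rewrite subr_gt0.
    move=> w Sw dvw; split => //; exists u, e; split => //.
    apply: le_lt_trans (dtri u v w (sub (US' u Uu)) Sv Sw) _.
    by rewrite -ltrBrDl.
  exists O; split => //; apply: seteq => z; split.
  + move=> Uz; have S'z := US' z Uz; split => //; split; first exact: sub.
    have [e [e0 he]] := hU z Uz; exists z, e; split => //.
    by have [_ ->] := d0 z z (sub S'z) (sub S'z).
  + by move=> [[Sz [u [e [Uu e0 he duz]]]] S'z]; apply: he.
Qed.

End Restr.

Section Restr2.
Variables (R : realType) (E : lmodType R) (L : VectorLattice E).
Local Notation le := (vle L).
Local Notation abs := (vabs L).
Variables (S S' : set E).
Hypothesis sub : S' `<=` S.
Hypothesis S'0 : S' 0.
Hypothesis S'D : forall a b, S' a -> S' b -> S' (a + b).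
Hypothesis S'Z : forall (t : R) a, S' a -> S' (t *: a).

Lemma restrict_ls (rho : set (set E)) :
  locally_solid_on L S rho -> locally_solid_on L S' (restrict_top rho S').
Proof.
move=> [[top [hadd [hsc hT2]]] hls]; split; [split; [|split; [|split]]|].
- exact: (restrict_topology sub top).
- move=> a b W S'a S'b [O [rO ->]] [Oab _].
  have [U [V [rU rV Ua Vb hUV]]] := hadd a b O (sub S'a) (sub S'b) rO Oab.
  exists (U `&` S'), (V `&` S'); split.
  + by exists U.
  + by exists V.
  + by [].
  + by [].
  + by move=> u v [Uu S'u] [Vv S'v]; split; [exact: hUV | exact: S'D].
- move=> t a W S'a [O [rO ->]] [Ota _].
  have [e [U [e0 rU Ua hU]]] := hsc t a O (sub S'a) rO Ota.
  exists e, (U `&` S'); split => //; first by exists U.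
  by move=> b u hb [Uu S'u]; split; [exact: hU | exact: S'Z].
- move=> a b S'a S'b ab.
  have [U [V [rU rV Ua Vb UV]]] := hT2 a b (sub S'a) (sub S'b) ab.
  exists (U `&` S'), (V `&` S'); split => //; [by exists U|by exists V|].
  apply: seteq => z; split => // -[[Uz _] [Vz _]].
  by have : (U `&` V) z by [] ; rewrite UV.
- move=> W [U' [[O [rO eU']] U'0 U'W]].
  have O0 : O 0 by move: U'0; rewrite eU' => -[].
  have [N [[O2 [rO2 O20 O2N]] NO NS sN]] := hls O (ex_intro _ O (And3 rO O0 (fun z h => h))).
  exists (N `&` S'); split.
  + exists (O2 `&` S'); split; [by exists O2|by []|].
    by move=> z [O2z S'z]; split => //; exact: O2N.
  + by move=> z [Nz S'z]; apply: U'W; rewrite eU'; split => //; exact: NO.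
  + by move=> z [].
  + move=> a b [Na S'a] S'b hab; split => //; apply: (sN a) => //; exact: sub.
Qed.

Lemma restrict_ssm (tau : set (set E)) :
  solidly_submetrisable_on L S (restrict_top tau S) ->
  solidly_submetrisable_on L S' (restrict_top tau S').
Proof.
move=> [rho [ls [d [md hd]] co]]; exists (restrict_top rho S'); split.
- exact: restrict_ls.
- exists d; split; last exact: (restrict_metric sub md hd).
  have [dp [d0 [dsym dtri]]] := md; split; [|split; [|split]].
  + by move=> a b ha hb; apply: dp; exact: sub.
  + by move=> a b ha hb; apply: d0; exact: sub.
  + by move=> a b ha hb; apply: dsym; exact: sub.
  + by move=> a b c ha hb hc; apply: dtri; exact: sub.
- move=> V [O [rO ->]]; have [G [tG ->]] := co O rO; exists G; split => //.
  apply: seteq => z; split; [by move=> [[] ]|by move=> [Gz S'z]; split => //; split => //; exact: sub].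
Qed.

End Restr2.



Section Tau.
Variables (R : realType) (E : lmodType R) (L : VectorLattice E).
Local Notation le := (vle L).
Local Notation abs := (vabs L).
Variable tau : set (set E).
Hypothesis htau : locally_solid_on L setT tau.
Local Notation nb := (nbhd_of tau 0).

Lemma nb0 W : nb W -> W 0.
Proof. by move=> [U [_ U0 UW]]; exact: UW. Qed.

Lemma nbT : nb setT.
Proof. have [[[_ [hT _]] _] _] := htau; by exists setT. Qed.

Lemma nbI A B : nb A -> nb B -> nb (A `&` B).
Proof.
have [[[_ [_ [_ [_ hI]]]] _] _] := htau.
move=> [U [tU U0 UA]] [V [tV V0 VB]]; exists (U `&` V); split => //; first exact: hI.
by move=> z [Uz Vz]; split; [exact: UA|exact: VB].
Qed.

Lemma nb_solid W : nb W -> exists N, [/\ nb N, N `<=` W & solid L N].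
Proof.
have [_ hls] := htau; move=> /hls [N [nN NW _ sN]]; exists N; split => //.
by move=> a b Na hab; apply: (sN a).
Qed.

Lemma nb_half W : nb W -> exists V, nb V /\ (forall a b, V a -> V b -> W (a + b)).
Proof.
have [[[_ [_ [_ [_ hI]]]] [hadd _]] _] := htau.
move=> [O [tO O0 OW]].
have O00 : O (0 + 0) by rewrite addr0.
have [U [V [tU tV U0 V0 hUV]]] := hadd 0 0 O I I tO O00.
exists (U `&` V); split; first by exists (U `&` V); split => //; exact: hI.
by move=> a b [Ua _] [_ Vb]; apply: OW; exact: hUV.
Qed.

Lemma nb_third W : nb W -> exists V, [/\ nb V, solid L V &
  (forall a b c, V a -> V b -> V c -> W (a + (b + c)))].
Proof.
move=> /nb_half [V1 [nV1 h1]]; have [V2 [nV2 h2]] := nb_half nV1.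
have [V3 [nV3 V32 sV3]] := nb_solid nV2.
exists V3; split => // a b c Va Vb Vc; apply: h1; last by apply: h2; exact: V32.
by rewrite -[a]addr0; apply: h2; [exact: V32|exact: nb0].
Qed.

Lemma nb_scale y W : nb W -> exists2 e : R, 0 < e & forall b : R, `|b| < e -> W (b *: y).
Proof.
have [[_ [_ [hsc _]]] _] := htau.
move=> [O [tO O0 OW]].
have O0y : O (0 *: y) by rewrite scale0r.
have [e [U [e0 tU Uy hU]]] := hsc 0 y O I tO O0y.
exists e => // b hb; apply: OW; apply: hU => //; by rewrite subr0.
Qed.

Lemma nb_trans o W : nb W -> exists G, [/\ tau G, G o & forall v, G v -> W (v - o)].
Proof.
have [[_ [hadd _]] _] := htau.
move=> [O [tO O0 OW]].
have Oo : O (o + - o) by rewrite subrr.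
have [U [V [tU tV Uo Vo hUV]]] := hadd o (- o) O I I tO Oo.
by exists U; split => // v Uv; apply: OW; exact: hUV.
Qed.

Variable M : nat -> set E.
Hypothesis nbM : forall n, nb (M n).

Lemma step_ex : exists f : set E * nat -> set E, forall p, nb p.1 ->
  [/\ nb (f p), solid L (f p), f p `<=` M p.2 &
    (forall a b c, f p a -> f p b -> f p c -> p.1 (a + (b + c)))].
Proof.
suff h : forall p : set E * nat, exists V, nb p.1 -> [/\ nb V, solid L V, V `<=` M p.2 &
    (forall a b c, V a -> V b -> V c -> p.1 (a + (b + c)))].
  by have [f hf] := choice h; exists f.
move=> [W n] /=; have [hW|hW] := pselect (nb W); last by exists setT.
have [V [nV sV hV]] := nb_third (nbI hW (nbM n)).
exists V => _; split => //.
- by move=> z Vz; have := hV z 0 0 Vz (nb0 nV) (nb0 nV); rewrite !addr0 => -[].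
- by move=> a b c Va Vb Vc; have [] := hV a b c Va Vb Vc.
Qed.

Lemma useq_ex : exists U : nat -> set E,
  [/\ U 0%N = setT, forall n, nb (U n), forall n, solid L (U n),
      forall n, U n.+1 `<=` M n &
      forall n a b c, U n.+1 a -> U n.+1 b -> U n.+1 c -> U n (a + (b + c))].
Proof.
have [f hf] := step_ex.
pose U := fix U n := match n with 0%N => setT | n'.+1 => f (U n', n') end.
have nU : forall n, nb (U n).
  elim => [|n ih]; first exact: nbT.
  by have [] := hf (U n, n) ih.
exists U; split => //.
- case => [|n]; first by move=> a b.
  by have [] := hf (U n, n) (nU n).
- by move=> n; have [] := hf (U n, n) (nU n).
- by move=> n; have [] := hf (U n, n) (nU n).
Qed.

End Tau.



Section W.
Variable R : realType.
Definition w (n : nat) : R := ((2 : R) ^+ n)^-1.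

Lemma w_pos n : 0 < w n.
Proof. by rewrite /w invr_gt0 exprn_gt0. Qed.

Lemma w_S n : w n = w n.+1 + w n.+1.
Proof.
rewrite /w exprS; have h : (2 : R) ^+ n != 0 by rewrite expf_neq0 // pnatr_eq0.
by field.
Qed.

Lemma w_le m n : w n <= w m -> (m <= n)%N.
Proof.
rewrite /w lef_pV2 ?posrE ?exprn_gt0 // ler_eXn2l //; exact: ltr1n.
Qed.

Lemma w_small (e : R) : 0 < e -> exists m, w m < e.
Proof.
move=> e0; have h1 : e^-1 < (Num.bound e^-1)%:R.
  by apply: archi_boundP; rewrite invr_ge0 ltW.
move: h1; set k := Num.bound _ => h1; exists k.
rewrite /w -[e in _ < e]invrK ltf_pV2 ?posrE ?exprn_gt0 ?invr_gt0 //.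
apply: lt_trans h1 _; rewrite -natrX ltr_nat; exact: ltn_expl.
Qed.

End W.

Section Seqs.
Variables (R : realType) (E : lmodType R) (L : VectorLattice E).
Local Notation le := (vle L).
Local Notation abs := (vabs L).
Variable U : nat -> set E.
Hypothesis U0 : forall n, U n 0.
Hypothesis U3 : forall n a b c, U n.+1 a -> U n.+1 b -> U n.+1 c -> U n (a + (b + c)).

Fixpoint tot (l : seq (nat * E)) : R := if l is p :: l' then w R p.1 + tot l' else 0.
Fixpoint sm (l : seq (nat * E)) : E := if l is p :: l' then p.2 + sm l' else 0.
Fixpoint valid (l : seq (nat * E)) : Prop :=
  if l is p :: l' then (U p.1 p.2 /\ le 0 p.2) /\ valid l' else True.

Lemma tot_cat l1 l2 : tot (l1 ++ l2) = tot l1 + tot l2.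
Proof. by elim: l1 => [|p l ih] /=; rewrite ?add0r // ih addrA. Qed.
Lemma sm_cat l1 l2 : sm (l1 ++ l2) = sm l1 + sm l2.
Proof. by elim: l1 => [|p l ih] /=; rewrite ?add0r // ih addrA. Qed.
Lemma valid_cat l1 l2 : valid l1 -> valid l2 -> valid (l1 ++ l2).
Proof. by elim: l1 => [|p l ih] //= [h1 h2] h3; split => //; apply: ih. Qed.
Lemma valid_catl l1 l2 : valid (l1 ++ l2) -> valid l1.
Proof. by elim: l1 => [|p l ih] //= [h1 h2]; split => //; apply: ih. Qed.
Lemma valid_catr l1 l2 : valid (l1 ++ l2) -> valid l2.
Proof. by elim: l1 => [|p l ih] //= [h1 h2]; apply: ih. Qed.
Lemma tot_ge0 l : 0 <= tot l.
Proof. elim: l => [|p l ih] //=; apply: addr_ge0 => //; exact/ltW/w_pos. Qed.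
Lemma tot_pos l : l != [::] -> 0 < tot l.
Proof. case: l => [|p l] //= _; apply: ltr_wpDr; [exact: tot_ge0|exact: w_pos]. Qed.
Lemma tot0 l : tot l = 0 -> l = [::].
Proof.
case: l => [//|p l] h; have := tot_pos (l := p :: l) isT.
by rewrite h ltxx.
Qed.

Lemma sm_ge0 l : valid l -> le 0 (sm l).
Proof.
elim: l => [|p l ih] /=; first by move=> _; exact: vle_refl.
by move=> [[_ h] hl]; rewrite -(addr0 0); apply: le_add2 => //; apply: ih.
Qed.

Lemma split_ex (h : R) l (p : R) : l != [::] -> 0 <= p -> p <= h -> p + tot l <= h + h ->
  exists l1 a l2, [/\ l = l1 ++ a :: l2, p + tot l1 <= h & tot l2 <= h].
Proof.
elim: l p => [|a l ih] p //= _ p0 ph hl.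
have [ha|ha] := lerP (p + w R a.1) h.
  have [->|ln] := eqVneq l [::].
    exists [::], a, [::]; split => //=; first by rewrite addr0.
    exact: le_trans p0 ph.
  have wa := w_pos R a.1.
  have hl' : p + w R a.1 + tot l <= h + h by rewrite -addrA.
  have [l1 [b [l2 [-> h1 h2]]]] := ih (p + w R a.1) ln (addr_ge0 p0 (ltW wa)) ha hl'.
  by exists (a :: l1), b, l2; split => //=; rewrite addrA.
exists [::], a, l; split => //=; first by rewrite addr0.
lra.
Qed.

Lemma U_S n : U n.+1 `<=` U n.
Proof. move=> a ha; have -> : a = a + (0 + 0) by rewrite !addr0.
by apply: U3. Qed.

Lemma U_mono k n : (k <= n)%N -> U n `<=` U k.
Proof.
move=> /subnK <-; elim: (n - k)%N => [|j ih]; first by [].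
by rewrite addSn => a /U_S; apply: ih.
Qed.

Lemma key k : forall l m, (size l <= k)%N -> valid l -> tot l <= w R m -> U m (sm l).
Proof.
elim: k => [|k ih] l m.
  by case: l => //= _ _ _; exact: U0.
case: l => [|q l0] hs hv ht; first exact: U0.
have ln : q :: l0 != [::] by [].
have := @split_ex (w R m.+1) (q :: l0) 0 ln (lexx _) (ltW (w_pos _ _)).
rewrite add0r -w_S => /(_ ht) [l1 [[n u] [l2 [el h1 h2]]]].
move: hs hv ht; rewrite el size_cat tot_cat sm_cat /= => hs hv ht.
move: hs; rewrite addnS ltnS => hs.
have s1 : (size l1 <= k)%N by apply: leq_trans hs; exact: leq_addr.
have s2 : (size l2 <= k)%N by apply: leq_trans hs; exact: leq_addl.
have v1 := valid_catl hv.
have [[Un u0] v2] := valid_catr hv.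
have wn : w R n <= w R m.
  apply: le_trans ht; have := tot_ge0 l1; have := tot_ge0 l2; lra.
have [e|ne] := eqVneq n m.
  subst n.
  have t1 : tot l1 = 0 by have := tot_ge0 l1; have := tot_ge0 l2; lra.
  have t2 : tot l2 = 0 by have := tot_ge0 l1; have := tot_ge0 l2; lra.
  rewrite (tot0 t1) (tot0 t2).
  by rewrite /= add0r addr0.
have mn : (m < n)%N by rewrite ltn_neqAle eq_sym ne (w_le wn).
apply: U3.
- by apply: ih => //; rewrite add0r in h1.
- exact: U_mono Un.
- exact: ih.
Qed.

End Seqs.



Section NormN.
Variables (R : realType) (E : lmodType R) (L : VectorLattice E).
Local Notation le := (vle L).
Local Notation abs := (vabs L).
Variable x : E.
Variable U : nat -> set E.
Hypothesis UT : U 0%N = setT.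
Hypothesis U0 : forall n, U n 0.
Hypothesis Usol : forall n, solid L (U n).
Hypothesis U3 : forall n a b c, U n.+1 a -> U n.+1 b -> U n.+1 c -> U n (a + (b + c)).
Hypothesis Usep : forall a, ideal_gen L x a -> (forall n, U n a) -> a = 0.

Local Notation ph := (phi L (abs x)).
Let c0 : le 0 (abs x). Proof. exact: abs_ge0. Qed.

Definition Sset (y : E) : set R :=
  fun r => exists l, [/\ valid L U l, le (ph y) (sm l) & r = tot l].
Definition N (y : E) : R := inf (Sset y).

Lemma Sset_ne y : Sset y (w R 0 + 0).
Proof.
exists [:: (0%N, ph y)]; split => //=; last by rewrite addr0; exact: vle_refl.
by split => //; split; [rewrite UT|exact: phi_ge0].
Qed.

Lemma Sset_inf y : has_inf (Sset y).
Proof.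
split; first by exists (w R 0 + 0); exact: Sset_ne.
by exists 0 => r [l [_ _ ->]]; exact: tot_ge0.
Qed.

Lemma N_ge0 y : 0 <= N y.
Proof.
apply: lb_le_inf; first by exists (w R 0 + 0); exact: Sset_ne.
by move=> r [l [_ _ ->]]; exact: tot_ge0.
Qed.

Lemma N_le y r : Sset y r -> N y <= r.
Proof. by move=> h; apply: ge_inf => //; have [] := Sset_inf y. Qed.

Lemma N_add y z : N (y + z) <= N y + N z.
Proof.
apply/ler_addgt0Pr => e e0.
have e2 : 0 < e / 2 by rewrite divr_gt0.
have [r1 [l1 [v1 h1 ->]] hr1] := inf_adherent e2 (Sset_inf y).
have [r2 [l2 [v2 h2 ->]] hr2] := inf_adherent e2 (Sset_inf z).
have : N (y + z) <= tot (l1 ++ l2).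
  apply: N_le; exists (l1 ++ l2); split => //; first exact: valid_cat.
  rewrite sm_cat; apply: le_tr (phi_add c0 y z) _; exact: le_add2.
rewrite tot_cat; rewrite /N in hr1 hr2 *; lra.
Qed.

Lemma N_mono y z : le (abs y) (abs z) -> N y <= N z.
Proof.
move=> h; apply: lb_le_inf; first by exists (w R 0 + 0); exact: Sset_ne.
move=> r [l [v hl ->]]; apply: N_le; exists l; split => //.
apply: le_tr hl; exact: phi_mono.
Qed.

Lemma N_abs_eq y z : abs y = abs z -> N y = N z.
Proof. by move=> h; apply/le_anti; rewrite !N_mono // h; exact: vle_refl. Qed.

Lemma NN y : N (- y) = N y.
Proof. by apply: N_abs_eq; rewrite absN. Qed.

Lemma N_small y m : U m (ph y) -> N y <= w R m.
Proof.
move=> h; rewrite -[w R m]addr0; apply: N_le.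
exists [:: (m, ph y)]; split => //=; last by rewrite addr0; exact: vle_refl.
by split => //; split => //; apply: phi_ge0.
Qed.

Lemma N_lt_U y m : N y < w R m -> U m (ph y).
Proof.
move=> /inf_lt [|r [l [v hl ->]] hr]; first by exists (w R 0 + 0); exact: Sset_ne.
have hU := key U0 U3 (leqnn (size l)) v (ltW hr).
apply: (Usol hU); rewrite (abs_phi c0 y) (abs_pos (sm_ge0 v)) //.
Qed.


Lemma lt_w_all (a : R) : (forall m, a <= w R m) -> a <= 0.
Proof.
move=> h; apply/ler_addgt0Pr => e e0; rewrite add0r.
have [m hm] := w_small e0; exact: le_trans (h m) (ltW hm).
Qed.

Lemma N0 : N 0 = 0.
Proof.
apply/le_anti; rewrite N_ge0 andbT; apply: lt_w_all => m; apply: N_small.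
have -> : ph 0 = 0; last exact: U0.
rewrite /phi abs0; apply: (@le_antis _ _ L); first exact: inf_lb_l.
apply: inf_ge0 => //; exact: vle_refl.
Qed.

Lemma N_zero y : band_gen L x y -> N y = 0 -> y = 0.
Proof.
move=> hy h0; apply: (band_disj hy); apply: Usep; first exact: phi_ig.
move=> m; apply: N_lt_U; rewrite h0; exact: w_pos.
Qed.

Lemma N_muln y k : N (y *+ k) <= k%:R * N y.
Proof.
elim: k => [|k ih]; first by rewrite mulr0n N0 mul0r.
rewrite mulrS; apply: le_trans (N_add _ _) _.
rewrite -natr1 mulrDl mul1r; move: ih; set a := N (y *+ k); set b := _ * N y; lra.
Qed.

Lemma N_scale_bound (t : R) : exists2 K : R, 0 <= K & forall y, N (t *: y) <= K * N y.
Proof.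
exists (Num.bound `|t|)%:R => // y; apply: le_trans (N_muln _ _).
apply: N_mono; rewrite absZ.
set k := Num.bound `|t|.
have -> : y *+ k = (k%:R : R) *: y by rewrite scaler_nat.
rewrite absZ normr_nat; apply: le_sub0'; rewrite -scalerBl.
rewrite -(scaler0 _ (k%:R - `|t|)); apply: vle_scale; last exact: abs_ge0.
rewrite subr_ge0 ltW //; exact: archi_boundP.
Qed.

Lemma N_scale_le1 (t : R) y : `|t| <= 1 -> N (t *: y) <= N y.
Proof.
move=> t1; apply: N_mono; rewrite absZ; apply: le_sub0'.
rewrite -{1}(scale1r (abs y)) -scalerBl -(scaler0 _ (1 - `|t|)).
apply: vle_scale; [by rewrite subr_ge0|exact: abs_ge0].
Qed.

End NormN.



Section Metric.
Variables (R : realType) (E : lmodType R).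
Variables (S : set E) (d : E -> E -> R).
Hypothesis hmet : metric_on S d.

Definition mball u r : set E := fun v => S v /\ d u v < r.

Lemma d_refl u : S u -> d u u = 0.
Proof. by move=> Su; have [_ [h _]] := hmet; have [_ ->] := h u u Su Su. Qed.

Lemma mball_open u r : S u -> metric_open S d (mball u r).
Proof.
have [_ [_ [_ tri]]] := hmet.
move=> Su; split; first by move=> v [].
move=> v [Sv duv]; exists (r - d u v); split; first by rewrite subr_gt0.
move=> z Sz dvz; split => //; have := tri u v z Su Sv Sz; lra.
Qed.

Lemma mball_center u r : S u -> 0 < r -> mball u r u.
Proof. by move=> Su r0; split => //; rewrite d_refl. Qed.

Lemma metric_top : topology_on S (metric_open S d).
Proof.
split; [|split; [|split; [|split]]].
- by move=> U [].
- split => // u Su; exists 1; split => // v Sv _.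
- by split => // u [].
- move=> F hF; split; first by move=> z [U FU Uz]; have [+ _] := hF U FU; apply.
  move=> u [U FU Uu]; have [_ hU] := hF U FU; have [e [e0 he]] := hU u Uu.
  by exists e; split => // v Sv duv; exists U => //; apply: he.
- move=> U V [US hU] [VS hV]; split; first by move=> z [Uz _]; exact: US.
  move=> u [Uu Vu]; have [e1 [e10 h1]] := hU u Uu; have [e2 [e20 h2]] := hV u Vu.
  exists (Num.min e1 e2); split; first by rewrite lt_min e10 e20.
  move=> v Sv; rewrite lt_min => /andP [d1 d2]; split; [exact: h1|exact: h2].
Qed.

Lemma metric_T2 a b : S a -> S b -> a <> b ->
  exists U V, [/\ metric_open S d U, metric_open S d V, U a, V b & U `&` V = set0].
Proof.
have [dp [d0 [dsym tri]]] := hmet.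
move=> Sa Sb ab.
have dpos : 0 < d a b.
  rewrite lt_neqAle dp // andbT eq_sym; apply/eqP => h.
  by apply: ab; have [+ _] := d0 a b Sa Sb; apply.
exists (mball a (d a b / 2)), (mball b (d a b / 2)); split.
- exact: mball_open.
- exact: mball_open.
- by apply: mball_center => //; rewrite divr_gt0.
- by apply: mball_center => //; rewrite divr_gt0.
- apply: seteq => z; split => // -[[Sz h1] [_ h2]].
  have := tri a z b Sa Sz Sb; rewrite (dsym z b) //; lra.
Qed.

End Metric.



Section Build.
Variables (R : realType) (E : lmodType R) (L : VectorLattice E).
Local Notation le := (vle L).
Local Notation abs := (vabs L).
Variable tau : set (set E).
Hypothesis htau : locally_solid_on L setT tau.
Variable x : E.
Variable U : nat -> set E.
Hypothesis UT : U 0%N = setT.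
Hypothesis Unb : forall n, nbhd_of tau 0 (U n).
Hypothesis Usol : forall n, solid L (U n).
Hypothesis U3 : forall n a b c, U n.+1 a -> U n.+1 b -> U n.+1 c -> U n (a + (b + c)).
Hypothesis Usep : forall a, ideal_gen L x a -> (forall n, U n a) -> a = 0.

Let U0 n : U n 0. Proof. exact: nb0 (Unb n). Qed.
Local Notation B := (band_gen L x).
Local Notation Nx := (N L x U).
Local Notation ph := (phi L (abs x)).
Let c0 : le 0 (abs x). Proof. exact: abs_ge0. Qed.

Let Nge0 y : 0 <= Nx y. Proof. exact: N_ge0. Qed.
Let Nadd y z : Nx (y + z) <= Nx y + Nx z. Proof. exact: N_add. Qed.
Let Nmono y z : le (abs y) (abs z) -> Nx y <= Nx z. Proof. exact: N_mono. Qed.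
Let Nneg y : Nx (- y) = Nx y. Proof. exact: NN. Qed.
Let Nsmall y m : U m (ph y) -> Nx y <= w R m. Proof. exact: N_small. Qed.
Let Nzero y : B y -> Nx y = 0 -> y = 0. Proof. exact: N_zero. Qed.
Let Nzero0 : Nx 0 = 0. Proof. exact: N0. Qed.
Let Nbound t : exists2 K : R, 0 <= K & forall y, Nx (t *: y) <= K * Nx y.
Proof. exact: N_scale_bound. Qed.
Let Nle1 (t : R) y : `|t| <= 1 -> Nx (t *: y) <= Nx y.
Proof. exact: N_scale_le1. Qed.

Definition dd y z := Nx (y - z).

Lemma dd_met : metric_on B dd.
Proof.
split; [|split; [|split]].
- by move=> a b _ _; exact: Nge0.
- move=> a b Ba Bb; split.
    by move=> /(Nzero (bgB Ba Bb)) /eqP; rewrite subr_eq0 => /eqP.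
  by move=> ->; rewrite /dd subrr.
- by move=> a b _ _; rewrite /dd -opprB Nneg.
- move=> a b c _ _ _; rewrite /dd.
  have -> : a - c = (a - b) + (b - c) by rewrite addrA subrK.
  exact: Nadd.
Qed.

Lemma U_ph m v : U m v -> U m (ph (- v)).
Proof.
move=> h; apply: (Usol h); rewrite (abs_phi c0) -(absN L v).
exact: phi_le_abs.
Qed.

Lemma rhoB_ls : locally_solid_on L B (metric_open B dd).
Proof.
split; [split; [exact: metric_top|split; [|split]]|].
- move=> a b W Ba Bb [WS hW] Wab.
  have [e [e0 he]] := hW (a + b) Wab.
  have e2 : 0 < e / 2 by rewrite divr_gt0.
  exists (mball B dd a (e / 2)), (mball B dd b (e / 2)); split.
  + exact: (mball_open dd_met (e / 2) Ba).
  + exact: (mball_open dd_met (e / 2) Bb).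
  + exact: (mball_center dd_met Ba e2).
  + exact: (mball_center dd_met Bb e2).
  + move=> u v [Bu du] [Bv dv]; apply: he; first exact: bgD.
    rewrite /dd opprD addrACA; apply: le_lt_trans (Nadd _ _) _.
    move: du dv; rewrite /dd; lra.
- move=> t a W Ba [WS hW] Wta.
  have [e [e0 he]] := hW (t *: a) Wta.
  have [K K0 hK] := Nbound t.
  have e3 : 0 < e / 3 by rewrite divr_gt0.
  have [m hm] := w_small e3.
  have [d1 d10 hd1] := nb_scale htau a (Unb m).
  set r := e / (3 * (K + 1)).
  have K1 : 0 < K + 1 by rewrite ltr_wpDl.
  have r0 : 0 < r by rewrite divr_gt0 // mulr_gt0.
  have hr : K * r + r = e / 3.
    rewrite /r; have h : K + 1 != 0 by rewrite gt_eqF.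
    by field.
  exists (Num.min d1 1), (mball B dd a r); split.
  + by rewrite lt_min d10 ltr01.
  + exact: (mball_open dd_met r Ba).
  + exact: (mball_center dd_met Ba r0).
  + move=> b u; rewrite lt_min => /andP [hb1 hb2] [Bu du].
    apply: he; first exact: bgZ.
    rewrite /dd.
    have -> : t *: a - b *: u = t *: (a - u) + ((t - b) *: (u - a) + (t - b) *: a).
      by rewrite -scalerDr subrK scalerBr scalerBl addrA subrK.
    apply: le_lt_trans (Nadd _ _) _.
    have h1 := hK (a - u).
    have h2 : Nx ((t - b) *: (u - a) + (t - b) *: a) <= Nx (u - a) + Nx ((t - b) *: a).
      apply: le_trans (Nadd _ _) _; rewrite lerD2r; apply: Nle1.
      by rewrite distrC ltW.
    have h3 : Nx ((t - b) *: a) <= w R m.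
      apply: Nsmall; rewrite -(opprK ((t - b) *: a)); apply: U_ph.
      rewrite -scaleNr; apply: hd1; rewrite normrN distrC //.
    have h4 : Nx (u - a) = Nx (a - u) by rewrite -opprB Nneg.
    have h5 : K * Nx (a - u) <= K * r by rewrite ler_wpM2l // ltW.
    move: du; rewrite /dd => du.
    move: h1 h2 h3 h4 h5 hm hr du; set p := Nx (a - u); set q := Nx ((t - b) *: a).
    set s := Nx (t *: (a - u)); set s2 := Nx (_ + _); lra.
- by move=> a b Ba Bb ab; exact: (metric_T2 dd_met Ba Bb ab).
- move=> W [O [[OS hO] O0 OW]].
  have [e [e0 he]] := hO 0 O0.
  exists (mball B dd 0 e); split.
  + exists (mball B dd 0 e); split => //.
      exact: (mball_open dd_met e (@bg0 _ _ L x)).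
    exact: (mball_center dd_met (@bg0 _ _ L x) e0).
  + by move=> v [Bv dv]; apply: OW; apply: he.
  + by move=> v [].
  + move=> a b [Ba da] Bb hab; split => //; apply: le_lt_trans da.
    by rewrite /dd !sub0r !Nneg; apply: Nmono.
Qed.

Lemma rhoB_coarse : coarser (metric_open B dd) (restrict_top tau B).
Proof.
move=> O [OS hO].
have [[[_ [_ [_ [hU _]]]] _] _] := htau.
exists (\bigcup_(G in [set G | tau G /\ G `&` B `<=` O]) G); split.
  by apply: hU => G [].
apply: seteq => z; split.
- move=> Oz; split; last exact: OS.
  have [e [e0 he]] := hO z Oz.
  have [m hm] := w_small e0.
  have [G [tG Gz hG]] := nb_trans htau z (Unb m).
  exists G => //; split => // v [Gv Bv]; apply: he => //.
  rewrite /dd; apply: le_lt_trans hm; apply: Nsmall.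
  rewrite -opprB; exact: U_ph (hG v Gv).
- by move=> [[G [tG GO] Gz] Bz]; apply: GO.
Qed.

Lemma B_ssm : solidly_submetrisable_on L B (restrict_top tau B).
Proof.
exists (metric_open B dd); split.
- exact: rhoB_ls.
- by exists dd; split; [exact: dd_met|].
- exact: rhoB_coarse.
Qed.

End Build.



Theorem proposition3p6 (R : realType) (E : lmodType R) (L : VectorLattice E)
  (tau : set (set E)) (x : E) :
  locally_solid_on L setT tau ->
  (solidly_submetrisable_on L (band_gen L x) (restrict_top tau (band_gen L x)) <->
   solidly_submetrisable_on L (ideal_gen L x) (restrict_top tau (ideal_gen L x))).
Proof.
move=> htau; split.
  apply: restrict_ssm.
  - exact: ig_bg.
  - exact: ig0.
  - exact: igD.
  - exact: igZ.
move=> [rho [_ [d [md hd]] co]].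
have hG : forall n, exists G, tau G /\ mball (ideal_gen L x) d 0 (w R n) = G `&` ideal_gen L x.
  move=> n; have := mball_open md (w R n) (@ig0 _ _ L x).
  move=> /hd /co [G [tG eG]]; by exists G.
have [G hG'] := choice hG.
have nbG : forall n, nbhd_of tau 0 (G n).
  move=> n; have [tG eG] := hG' n; exists (G n); split => //.
  have : (G n `&` ideal_gen L x) 0 by rewrite -eG; exact: (mball_center md (@ig0 _ _ L x) (w_pos R n)).
  by case.
have sepG : forall a, ideal_gen L x a -> (forall n, G n a) -> a = 0.
  move=> a Ia hGa.
  have hb : forall n, d 0 a < w R n.
    move=> n; have [_ eG] := hG' n.
    have : mball (ideal_gen L x) d 0 (w R n) a by rewrite eG; split => //; exact: hGa.
    by case.
  have [dp [d0 _]] := md.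
  have da : d 0 a = 0.
    apply/le_anti; rewrite dp ?andbT //; last exact: ig0.
    by apply: lt_w_all => n; exact: ltW (hb n).
  by have [+ _] := d0 0 a (@ig0 _ _ L x) Ia; move=> /(_ da) <-.
have [U [UT Unb Usol UM U3]] := useq_ex htau nbG.
apply: (B_ssm htau UT Unb Usol U3).
move=> a Ia hUa; apply: sepG => // n; exact: UM (hUa n.+1).
Qed.
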